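(* For every $\delta>0$ and $n\in\mathbb{N}$ there exists $N\in\mathbb{N}$ such that the following holds for every $N$-partitioned hypergraph $H$ and every choice of subsets $X_{ijk\ell}\subseteq V_{jk}$, for $i<j<k<\ell$, $i,j,k,\ell\in[N]$, with $|X_{ijk\ell}|\ge\delta|V_{jk}|$: there exist an induced $n$-partitioned subhypergraph $H'$ of $H$ with index set $I\subseteq[N]$ and vertices $\omega_{jk}\in V_{jk}$, $j<k$, $j,k\in I$, such that $\omega_{jk}\in X_{ijk\ell}$ for all $i,\ell\in I$ with $i<j<k<\ell$.
   Context: An $n$-partitioned hypergraph $H$ is a finite $3$-uniform hypergraph whose vertex set is partitioned into nonempty sets $V_{ij}$, $1\le i<j\le n$, such that every edge has, for some $1\le i<j<k\le n$, exactly one vertex in each of $V_{ij}$, $V_{ik}$, $V_{jk}$. For $I\subseteq[n]$, the induced subhypergraph with index set $I$ is the $|I|$-partitioned hypergraph with parts $V_{ij}$, $i<j$, $i,j\in I$ (indexed by elements of $I$) and all edges of $H$ contained in the union of these parts. *)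

(* Defs.v *)
From HB Require Import structures.
From mathcomp Require Import all_boot all_order all_algebra.
From mathcomp Require Import reals.
Set Implicit Arguments. Unset Strict Implicit. Unset Printing Implicit Defensive.
Import Order.TTheory GRing.Theory Num.Theory.

(* Indices [N] are rendered as 'I_N (0-based; only the order matters).
   V i j is the part V_{ij}; only the values with i < j are meaningful. *)
Definition partitioned_hypergraph (T : finType) (N : nat)
    (V : 'I_N -> 'I_N -> {set T}) (E : {set {set T}}) : Prop :=
  (forall i j : 'I_N, i < j -> V i j != set0) /\
  (forall x : T, exists! p : 'I_N * 'I_N, p.1 < p.2 /\ x \in V p.1 p.2) /\
  (forall e, e \in E -> exists i j k : 'I_N, [/\ i < j, j < k &
     exists a b c, [/\ a \in V i j, b \in V i k, c \in V j k &
                       e = [set a; b; c]]]).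

Definition induced_edges (T : finType) (N : nat)
    (V : 'I_N -> 'I_N -> {set T}) (E : {set {set T}}) (I : {set 'I_N}) :
    {set {set T}} :=
  [set e in E | e \subset \bigcup_(i in I) \bigcup_(j in I | i < j) V i j].

(* Main.v *)
Require Import Defs.
From HB Require Import structures.
From mathcomp Require Import all_boot all_order all_algebra.
From mathcomp Require Import reals.
From mathcomp Require Import zify.
Import Order.TTheory GRing.Theory Num.Theory.
Set Implicit Arguments. Unset Strict Implicit.


Fixpoint goodR (r : nat) (c : seq nat -> bool) (xs : seq (nat * bool)) : Prop :=
  match xs with
  | [::] => True
  | (x, b) :: rest =>
      (forall u, subseq u (map fst rest) -> size u = r -> c (x :: u) = b)
      /\ goodR r c rest
  end.

Lemma goodR_hom r c xs : goodR r c xs -> forall b0 w,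
  subseq w (map fst (filter (fun p => p.2 == b0) xs)) -> size w = r.+1 -> c w = b0.
Proof.
elim: xs => [|[x b] xs IH] /=.
  by move=> _ b0 w /= /eqP ->.
move=> [H1 H2] b0 w.
case: eqP => [<-|_] /=; last exact: IH.

case: w => [|y w] //= Hs [Hw].
move: Hs; case: eqP => [->|_] Hs.
  apply: H1 Hw; apply: subseq_trans Hs _; apply: map_subseq; exact: filter_subseq.
by apply: IH => //=; rewrite Hw.
Qed.

Lemma ramsey_build r
  (H : forall m, exists M, forall (c : seq nat -> bool) (s : seq nat), M <= size s ->
     exists t b, [/\ subseq t s, size t = m & forall u, subseq u t -> size u = r -> c u = b]) :
  forall L, exists M, forall c s, M <= size s ->
    exists xs : seq (nat * bool), [/\ size xs = L, subseq (map fst xs) s & goodR r c xs].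
Proof.
elim=> [|L [ML IHL]].
  by exists 0 => c s _; exists [::]; split => //; exact: sub0seq.
have [M' HM'] := H ML.
exists M'.+1 => c [|x s] //= Hs.
have [t' [b [Ht's Ht' Hh]]] := HM' (fun u => c (x :: u)) s Hs.
have [xs [Hsz Hsub Hg]] := IHL c t' (eq_leq (esym Ht')).
exists ((x, b) :: xs); split => //=; first by rewrite Hsz.
  by rewrite eqxx; apply: subseq_trans Hsub Ht's.
split => // u Hu Hsu; apply: Hh => //; exact: subseq_trans Hu Hsub.
Qed.

Lemma ramsey (r m : nat) : exists M, forall (c : seq nat -> bool) (s : seq nat), M <= size s ->
  exists t b, [/\ subseq t s, size t = m & forall u, subseq u t -> size u = r -> c u = b].
Proof.
elim: r m => [|r IH] m.
  exists m => c s Hs; exists (take m s), (c [::]); split.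
  - exact: take_subseq.
  - exact: size_takel.
  - by case.
have [M HM] := ramsey_build IH (m + m).
exists M => c s Hs.
have [xs [Hsz Hsub Hg]] := HM c s Hs.
pose cnt b0 := count (fun p : nat * bool => p.2 == b0) xs.
have Hc : cnt true + cnt false = m + m.
  rewrite -Hsz /cnt; elim: (xs) => [|[x b] ys IHy] //=; case: b => /=; lia.
have [b0 Hb0] : exists b0, m <= cnt b0.
  case: (leqP m (cnt true)) => h; first by exists true.
  by exists false; lia.
exists (take m (map fst (filter (fun p => p.2 == b0) xs))), b0; split.
- apply: subseq_trans (take_subseq _ _) _; apply: subseq_trans Hsub.
  apply: map_subseq; exact: filter_subseq.
- by rewrite size_takel // size_map size_filter.
- move=> u Hu Hsu; apply: (goodR_hom Hg) Hsu.
  exact: subseq_trans Hu (take_subseq _ _).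
Qed.

Lemma count_decomp (X : Type) (F : finType) (g : X -> F) (P : pred X) (s : seq X) :
  count P s = \sum_(y : F) count (fun x => P x && (g x == y)) s.
Proof.
elim: s => [|x s IH] /=; first by rewrite big1.
rewrite big_split /= -IH; congr (_ + _).
case: (P x) => /=; last by rewrite big1.
rewrite (bigD1 (g x)) //= eqxx big1 // => y /negbTE; rewrite eq_sym => ->.
by [].
Qed.

Lemma pigeon (X : Type) (F : finType) (g : X -> F) (P : pred X) (s : seq X) k :
  k * #|F| < count P s -> exists y, k < count (fun x => P x && (g x == y)) s.
Proof.
move=> H.
case: (boolP [exists y, k < count (fun x => P x && (g x == y)) s]) => [/existsP [y Hy]|/existsPn Hn]; first by exists y.
have : count P s <= \sum_(y : F) k.
  rewrite (count_decomp g); apply: leq_sum => y _.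
  by rewrite leqNgt Hn.
by rewrite sum_nat_const cardT -cardE mulnC leqNgt H.
Qed.

Lemma sum_count_seq (X : Type) (s : seq X) (p : pred X) :
  \sum_(x <- s) (p x : nat) = count p s.
Proof. by elim: s => [|x s IH]; rewrite ?big_nil ?big_cons ?IH. Qed.

Lemma sum_const_seq (X : Type) (s : seq X) c :
  \sum_(x <- s) c = size s * c.
Proof. by elim: s => [|x s IH]; rewrite ?big_nil ?big_cons ?IH //= mulSn. Qed.

Lemma sum_in_card (T : finType) (V Y : {set T}) : Y \subset V ->
  \sum_(w in V) (w \in Y : nat) = #|Y|.
Proof.
move=> HYV.
rewrite (eq_bigr (fun w => if w \in Y then 1 else 0)); last by move=> w _; case: (w \in Y).
rewrite -big_mkcondr sum1_card; apply: eq_card => w; rewrite unfold_in /=.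
by case Hw: (w \in Y); rewrite ?andbF ?andbT // (subsetP HYV).
Qed.

Lemma rect (T : finType) (K n : nat) (V : {set T}) (Y : nat -> nat -> {set T})
    (As Bs : seq nat) :
  0 < K -> V != set0 ->
  (forall i l, i \in As -> l \in Bs -> Y i l \subset V /\ #|V| <= K * #|Y i l|) ->
  size As = 2 * K * n -> size Bs = 2 * K * n * 2 ^ (2 * K * n) + 1 ->
  exists w, w \in V /\ exists S Rr, [/\ subseq S As, subseq Rr Bs, size S = n,
     size Rr = n & forall i l, i \in S -> l \in Rr -> w \in Y i l].
Proof.
move=> HK HV HY Ha Hb.
case: (posnP n) => [n0|npos].
  have [w Hw] := set0Pn V HV.
  by exists w; split => //; exists [::], [::]; rewrite n0; split => //; exact: sub0seq.
pose d w l := count (fun i => w \in Y i l) As.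
pose g w := \sum_(l <- Bs) d w l.
have [w [HwV Hw]] : exists w, w \in V /\ size As * size Bs <= K * g w.
  case: (boolP [exists w in V, size As * size Bs <= K * g w]) => [/existsP [w /andP [? ?]]|/exists_inPn Hn].
    by exists w.
  exfalso.
  have H1 : \sum_(w in V) (K * g w).+1 <= \sum_(w in V) (size As * size Bs).
    by apply: leq_sum => w /Hn; rewrite -ltnNge.
  have H2 : \sum_(w in V) g w =
      \sum_(l <- Bs) \sum_(i <- As) \sum_(w in V) (w \in Y i l : nat).
    rewrite exchange_big /=; apply: eq_bigr => l _.
    rewrite exchange_big /=; apply: eq_bigr => w _.
    by rewrite /d -sum_count_seq.
  have H3 : size Bs * (size As * #|V|) <= K * \sum_(w in V) g w.
    rewrite H2 big_distrr /= -sum_const_seq big_seq [X in _ <= X]big_seq.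
    apply: leq_sum => l Hl; rewrite big_distrr /= -sum_const_seq big_seq [X in _ <= X]big_seq.
    apply: leq_sum => i Hi; have [HS HVY] := HY i l Hi Hl.
    by rewrite sum_in_card.
  move: H1; rewrite (eq_bigr (fun w => K * g w + 1)); last by move=> w _; rewrite addn1.
  rewrite big_split /= !sum_nat_const -big_distrr /=.
  have : 0 < #|V| by rewrite card_gt0.
  lia.
pose big l := n <= d w l.
have Hg : g w <= size As * count big Bs + size Bs * (n - 1).
  rewrite -sum_count_seq -(sum_const_seq Bs (n - 1)) big_distrr /= -big_split /=.
  apply: leq_sum => l _; rewrite /big.
  case: (leqP n (d w l)) => h /=.
    by rewrite muln1 /d (leq_trans (count_size _ _)) ?leq_addr.
  rewrite muln0 /=; lia.
have Hcb : (n - 1) * #|{ffun 'I_(size As) -> bool}| < count big Bs.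
  rewrite card_ffun card_bool card_ord.
  set E := 2 ^ size As in Hb *.
  set cb := count big Bs in Hg *.
  have H1 : size As * size Bs <= K * (size As * cb + size Bs * (n - 1)).
    exact: leq_trans Hw (leq_mul (leqnn K) Hg).
  have H2 : 2 * n * size Bs <= size As * cb + size Bs * (n - 1).
    rewrite -(leq_pmul2l HK); apply: leq_trans H1; rewrite Ha; apply: eq_leq; rewrite !mulnA (mulnC K 2) -(mulnA 2 K n); by [].
  have H3 : size Bs * (n + 1) <= size As * cb.
    have e3 : 2 * n * size Bs = 2 * (size Bs * n) by rewrite (mulnC (size Bs)) mulnA.
    have e4 : size Bs <= size Bs * n by rewrite leq_pmulr.
    move: H2; rewrite mulnBr mulnDr !muln1 e3.
    set X := size Bs * n in e4 *; set Z := size As * cb; lia.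
  rewrite Ha Hb in H3.
  have H4 : 2 * K * n * (E * (n - 1)) < 2 * K * n * cb.
    apply: leq_trans _ H3; rewrite mulnDl mul1n -addn1 mulnA.
    apply: leq_add; last by rewrite addn1.
    by apply: leq_mul; [rewrite /E Ha | lia].
  by rewrite ltn_pmul2l in H4; [rewrite mulnC | rewrite !muln_gt0 HK npos].
pose mk l : {ffun 'I_(size As) -> bool} := [ffun x : 'I_(size As) => w \in Y (nth 0 As x) l].
have [phi Hphi] := pigeon mk Hcb.
set q := fun l => big l && (mk l == phi) in Hphi.
have Hq : n <= count q Bs by lia.
pose Rr := take n (filter q Bs).
have HRr : size Rr = n by rewrite size_takel // size_filter.
pose l0 := nth 0 Rr 0.
have Hl0 : q l0.
  have : l0 \in filter q Bs by apply: mem_take (mem_nth _ _); rewrite HRr.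
  by rewrite mem_filter => /andP [].
move: Hl0 => /andP [Hbig0 /eqP Hmk0].
pose S := take n (filter (fun i => w \in Y i l0) As).
exists w; split => //; exists S, Rr; split.
- apply: subseq_trans (take_subseq _ _) (filter_subseq _ _).
- apply: subseq_trans (take_subseq _ _) (filter_subseq _ _).
- by rewrite size_takel // size_filter.
- exact: HRr.
move=> i l /mem_take; rewrite mem_filter => /andP [Hi0 HiA] /mem_take.
rewrite mem_filter => /andP [/andP [_ /eqP Hmk] _].
have Hx : index i As < size As by rewrite index_mem.
have := congr1 (fun f : {ffun 'I_(size As) -> bool} => f (Ordinal Hx)) (etrans Hmk (esym Hmk0)).
by rewrite !ffunE /= nth_index // => ->.
Qed.

Lemma sub_iota (P : seq nat) lo m : sorted ltn P ->
  all (fun z => lo <= z < lo + m) P -> subseq P (iota lo m).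
Proof.
elim: m lo P => [|m IH] lo P HP Hall.
  case: P HP Hall => [|x P] //= _ /andP [/andP [h1 h2] _]; lia.
case: P HP Hall => [|x P] HP Hall; first exact: sub0seq.
rewrite /=; case: eqP => [exl|hne].
  apply: IH; first exact: path_sorted HP.
  apply/allP => z hz.
  have := allP (order_path_min ltn_trans HP) z hz.
  have := allP Hall z; rewrite inE hz orbT => /(_ isT).
  rewrite exl; lia.
apply: IH => //; apply/allP => z hz.
have hx := allP Hall x (mem_head _ _).
have hz' := allP Hall z hz.
have : x <= z.
  move: hz; rewrite inE => /orP [/eqP -> //|hz].
  exact: ltnW (allP (order_path_min ltn_trans HP) z hz).
move: hne hx hz' => /eqP; lia.
Qed.

Lemma mem_take_nth (t : seq nat) a i : a <= size t -> i \in take a t ->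
  exists2 x, x < a & i = nth 0 t x.
Proof.
move=> ha hi; exists (index i (take a t)).
  by rewrite -{2}(size_takel ha) index_mem.
have hx : index i (take a t) < a by rewrite -{2}(size_takel ha) index_mem.
by rewrite -(nth_take _ hx) nth_index.
Qed.

Lemma P_sorted s s' n : n <= s -> s < s' ->
  sorted ltn (iota (s - n) n ++ [:: s, s' & iota s'.+1 n]).
Proof.
move=> h1 h2.
rewrite sorted_pairwise; last exact: ltn_trans.
rewrite pairwise_cat; apply/and3P; split.
- apply/allrelP => x y; rewrite mem_iota !inE mem_iota => /andP [hx1 hx2] /orP [/eqP ->|/orP [/eqP ->|/andP [hy1 hy2]]]; lia.
- by rewrite -sorted_pairwise ?iota_ltn_sorted //; exact: ltn_trans.
rewrite /= -sorted_pairwise ?iota_ltn_sorted; last exact: ltn_trans.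
rewrite andbT h2 /=; apply/andP; split; apply/allP => z; rewrite mem_iota /= => /andP [hz1 hz2]; lia.
Qed.

Definition colr (T : finType) (N : nat) (V : 'I_N.+1 -> 'I_N.+1 -> {set T})
    (X : 'I_N.+1 -> 'I_N.+1 -> 'I_N.+1 -> 'I_N.+1 -> {set T}) (n : nat) (u : seq nat) : bool :=
  [exists w : T, (w \in V (inord (nth 0 u n)) (inord (nth 0 u n.+1))) &&
    [forall a' : 'I_n, [forall b' : 'I_n,
      w \in X (inord (nth 0 u a')) (inord (nth 0 u n)) (inord (nth 0 u n.+1))
               (inord (nth 0 u (n.+2 + b')))]]].

Unset Implicit Arguments. Set Strict Implicit.
Local Open Scope ring_scope.

Lemma dens_nat (R : realType) (delta : R) : 0 < delta ->
  exists K : nat, (0 < K)%N /\ forall v x : nat, delta * v%:R <= x%:R -> (v <= K * x)%N.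
Proof.
move=> hd.
exists (Num.bound (delta^-1)).+1; split => // v x h.
have hK : delta^-1 <= ((Num.bound (delta^-1)).+1)%:R.
  apply: ltW; apply: lt_le_trans (archi_boundP _) _; first by rewrite invr_ge0 ltW.
  by rewrite ler_nat.
rewrite -(ler_nat R) natrM.
have -> : (v%:R : R) = delta^-1 * (delta * v%:R) by rewrite mulrA mulVf ?mul1r // gt_eqF.
apply: le_trans (_ : delta^-1 * x%:R <= _).
  by apply: ler_wpM2l => //; rewrite invr_ge0 ltW.
by apply: ler_wpM2r.
Qed.

Theorem lemma4p7 (R : realType) (delta : R) (n : nat) : 0 < delta ->
  exists N : nat, forall (T : finType) (V : 'I_N -> 'I_N -> {set T})
    (E : {set {set T}}) (X : 'I_N -> 'I_N -> 'I_N -> 'I_N -> {set T}),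
    partitioned_hypergraph V E ->
    (forall i j k l : 'I_N, (i < j)%N -> (j < k)%N -> (k < l)%N ->
       X i j k l \subset V j k /\ delta * #|V j k|%:R <= #|X i j k l|%:R) ->
    exists (I : {set 'I_N}) (omega : 'I_N -> 'I_N -> T),
      #|I| = n /\
      forall j k : 'I_N, j \in I -> k \in I -> (j < k)%N ->
        omega j k \in V j k /\
        forall i l : 'I_N, i \in I -> l \in I -> (i < j)%N -> (k < l)%N ->
          omega j k \in X i j k l.
Proof.
move=> hd.
have [K [HK HKd]] := @dens_nat R delta hd.
pose a := (2 * K * n)%N.
pose b := (2 * K * n * 2 ^ (2 * K * n) + 1)%N.
pose m := (a + 2 + b + 3 * n)%N.
have [M HM] := ramsey (n + n + 2) m.
exists M.+2 => T V E X hP hX.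
pose f : nat -> 'I_M.+2 := fun x => inord x.
have Hf : forall x, (x < M.+2)%N -> nat_of_ord (f x) = x by move=> x hx; rewrite /f inordK.
have hsz : (M <= size (iota 0 M.+2))%N by rewrite size_iota; lia.
have [t [b0 [Hts Htsz Hhom]]] := HM (colr V X n) (iota 0 M.+2) hsz.
have Hsort : sorted ltn t := subseq_sorted ltn_trans Hts (iota_ltn_sorted 0 _).
have HtN : forall x, (x < m)%N -> (nth 0%N t x < M.+2)%N.
  move=> x hx; have : nth 0%N t x \in iota 0 M.+2.
    by apply: (mem_subseq Hts); rewrite mem_nth // Htsz.
  by rewrite mem_iota.
have Hmono : forall x y, (x < m)%N -> (y < m)%N ->
    (nth 0%N t x < nth 0%N t y)%N = (x < y)%N.
  move=> x y hx hy; case: (ltngtP x y) => hxy.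
  - by apply: (sorted_ltn_nth ltn_trans 0%N Hsort); rewrite ?inE ?Htsz.
  - apply/negbTE; rewrite -leqNgt ltnW //.
    by apply: (sorted_ltn_nth ltn_trans 0%N Hsort); rewrite ?inE ?Htsz.
  - by rewrite hxy ltnn.
have Hlt : forall x y, (x < y)%N -> (y < m)%N -> (nth 0%N t x < nth 0%N t y)%N.
  by move=> x y hxy hy; rewrite Hmono //; exact: ltn_trans hxy hy.
have Hg : forall x, (x < m)%N -> nat_of_ord (f (nth 0%N t x)) = nth 0%N t x.
  by move=> x hx; apply: Hf; apply: HtN.
case: b0 Hhom => Hhom; last first.
  exfalso.
  pose As := take a t; pose Bs := take b (drop a.+2 t).
  pose j0 := nth 0%N t a; pose k0 := nth 0%N t a.+1.
  have ham : (a.+1 < m)%N by rewrite /m; lia.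
  have HAs : forall i, i \in As -> exists2 x, (x < a)%N & i = nth 0%N t x.
    by move=> i; apply: mem_take_nth; rewrite Htsz /m; lia.
  have HBs : forall l, l \in Bs -> exists2 y, (y < b)%N & l = nth 0%N t (a.+2 + y).
    move=> l hl; have [|y hy ->] := mem_take_nth _ hl.
      by rewrite size_drop Htsz /m; lia.
    by exists y => //; rewrite nth_drop.
  have hj0k0 : (f j0 < f k0)%N.
    have ha0 : (a < m)%N by lia.
    by rewrite /j0 /k0 !Hg //; exact: (Hlt a a.+1 (ltnSn a) ham).
  have HY : forall i l, i \in As -> l \in Bs ->
      X (f i) (f j0) (f k0) (f l) \subset V (f j0) (f k0) /\
      (#|V (f j0) (f k0)| <= K * #|X (f i) (f j0) (f k0) (f l)|)%N.
    move=> i l /HAs [x hx ->] /HBs [y hy ->].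
    have hx' : (x < m)%N by rewrite /m; lia.
    have hy' : (a.+2 + y < m)%N by rewrite /m; lia.
    have ha0 : (a < m)%N by lia.
    have h1 : (f (nth 0%N t x) < f j0)%N.
      by rewrite /j0 !Hg //; exact: (Hlt x a hx ha0).
    have h2 : (f k0 < f (nth 0%N t (a.+2 + y)))%N.
      by rewrite /k0 !Hg //; apply: (Hlt a.+1 (a.+2 + y)) => //; lia.
    have [hsub hden] := hX _ _ _ _ h1 hj0k0 h2.
    by split => //; apply: HKd.
  have HszA : size As = (2 * K * n)%N by rewrite size_takel // Htsz /m; lia.
  have HszB : size Bs = (2 * K * n * 2 ^ (2 * K * n) + 1)%N.
    by rewrite size_takel // size_drop Htsz /m; lia.
  have [w [HwV [S [Rr [HS HRr HSz HRrz Hall]]]]] :=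
    @rect T K n (V (f j0) (f k0)) (fun i l => X (f i) (f j0) (f k0) (f l)) As Bs HK
      ((proj1 hP) _ _ hj0k0) HY HszA HszB.
  pose u := S ++ j0 :: k0 :: Rr.
  have Ht : t = As ++ j0 :: k0 :: drop a.+2 t.
    by rewrite /As /j0 /k0 -!drop_nth ?cat_take_drop // Htsz; lia.
  have Hu : subseq u t.
    rewrite [X in subseq _ X]Ht; apply: cat_subseq => //.
    rewrite /= eqxx /= eqxx; exact: subseq_trans HRr (take_subseq _ _).
  have Husz : size u = (n + n + 2)%N by rewrite size_cat /= HSz HRrz; lia.
  move: (Hhom u Hu Husz); rewrite /colr => /negbT/negP; apply.
  apply/existsP; exists w.
  have Hun : nth 0%N u n = j0 by rewrite nth_cat HSz ltnn subnn.
  have Hun1 : nth 0%N u n.+1 = k0 by rewrite nth_cat HSz ltnNge leqnSn /= subSnn.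
  rewrite Hun Hun1 -/(f j0) -/(f k0) HwV /=; apply/forallP => a'; apply/forallP => b'.
  have h1 : nth 0%N u a' = nth 0%N S a' by rewrite nth_cat HSz ltn_ord.
  have h2 : nth 0%N u (n.+2 + b') = nth 0%N Rr b'.
    rewrite nth_cat HSz; case: ltnP => h; first lia.
    by have -> : (n.+2 + b' - n = b'.+2)%N by lia.
  rewrite h1 h2; apply: Hall; apply: mem_nth; by rewrite ?HSz ?HRrz.
have hN01 : (f 0%N < f 1%N)%N by rewrite !Hf.
have [w0 _] := set0Pn _ ((proj1 hP) _ _ hN01).
pose I := [set f (nth 0%N t (n + x)) | x : 'I_n].
pose Pb j k (w : T) := (w \in V j k) && [forall i in I, [forall l in I,
   (i < j)%N ==> (k < l)%N ==> (w \in X i j k l)]].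
have HnI : forall x : 'I_n, (n + x < m)%N.
  by move=> x; have := ltn_ord x; rewrite /m; lia.
exists I, (fun j k => odflt w0 [pick w | Pb j k w]); split.
  rewrite card_imset ?card_ord // => x y hxy.
  have := congr1 val hxy; rewrite /= !Hg // => e.
  apply: val_inj => /=; case: (ltngtP x y) => // h.
    by have := Hlt _ _ (_ : (n + x < n + y)%N) (HnI y); rewrite e ltnn ltn_add2l; move/(_ h).
  by have := Hlt _ _ (_ : (n + y < n + x)%N) (HnI x); rewrite e ltnn ltn_add2l; move/(_ h).
move=> j k /imsetP [x _ ->] /imsetP [y _ ->] hjk.
have hx := ltn_ord x; have hy := ltn_ord y.
have hxm := HnI x; have hym := HnI y.
rewrite !Hg // Hmono // in hjk.
suff [w Hw] : exists w, Pb (f (nth 0%N t (n + x))) (f (nth 0%N t (n + y))) w.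
  case: pickP => [w' /andP [Hw1 Hw2] | Hn]; last by rewrite Hn in Hw.
  split => // i l Hi Hl hij hkl.
  move/forallP: Hw2 => /(_ i); rewrite Hi /= => /forallP /(_ l); rewrite Hl /=.
  by move=> /implyP /(_ hij) /implyP /(_ hkl).
set s0 := (n + x)%N in hxm hjk *; set s1 := (n + y)%N in hym hjk *.
have hs0n : (n <= s0)%N by rewrite /s0 leq_addr.
have hs1 : (s1 < n + n)%N by rewrite /s1; lia.
pose P := iota (s0 - n) n ++ [:: s0, s1 & iota s1.+1 n].
pose u := map (nth 0%N t) P.
have HPs : subseq P (iota 0 m).
  apply: sub_iota; first exact: P_sorted.
  apply/allP => z; rewrite mem_cat !inE !mem_iota.
  move=> /orP [/andP [h1 h2]|/orP [/eqP ->|/orP [/eqP ->|/andP [h1 h2]]]]; rewrite /m; lia.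
have HszP : size P = (n + n + 2)%N by rewrite size_cat /= !size_iota; lia.
have Hu : subseq u t.
  have Et : map (nth 0%N t) (iota 0 (size t)) = t := mkseq_nth 0%N t.
  by rewrite -[X in subseq _ X]Et Htsz; exact: map_subseq HPs.
have Husz : size u = (n + n + 2)%N by rewrite size_map.
have HuP : forall z, (z < n + n + 2)%N -> nth 0%N u z = nth 0%N t (nth 0%N P z).
  by move=> z hz; rewrite (nth_map 0%N) // HszP.
have HPn : nth 0%N P n = s0 by rewrite nth_cat size_iota ltnn subnn.
have HPn1 : nth 0%N P n.+1 = s1 by rewrite nth_cat size_iota ltnNge leqnSn /= subSnn.
have HPa : forall a', (a' < n)%N -> nth 0%N P a' = (s0 - n + a')%N.
  by move=> a' ha; rewrite nth_cat size_iota ha nth_iota.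
have HPb : forall b', (b' < n)%N -> nth 0%N P (n.+2 + b') = (s1.+1 + b')%N.
  move=> b' hb; rewrite nth_cat size_iota; case: ltnP => h; first lia.
  have -> : (n.+2 + b' - n = b'.+2)%N by lia.
  by rewrite /= nth_iota.
have := Hhom u Hu Husz; rewrite /colr => /existsP [w /andP [HwV Hw]].
have Hun : nth 0%N u n = nth 0%N t s0 by rewrite HuP ?HPn //; lia.
have Hun1 : nth 0%N u n.+1 = nth 0%N t s1 by rewrite HuP ?HPn1 //; lia.
exists w; apply/andP; split; first by move: HwV; rewrite Hun Hun1.
apply/forallP => i; apply/implyP => /imsetP [x' _ ->].
apply/forallP => l; apply/implyP => /imsetP [y' _ ->].
have hx' := ltn_ord x'; have hy' := ltn_ord y'.
have hxm' := HnI x'; have hym' := HnI y'.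
apply/implyP => hij; apply/implyP => hkl.
rewrite !Hg // Hmono // in hij.
rewrite !Hg // Hmono // in hkl.
have ha : (n + x' - (s0 - n) < n)%N by lia.
have hb : (n + y' - s1.+1 < n)%N by lia.
have := forallP (forallP Hw (Ordinal ha)) (Ordinal hb).
rewrite /= Hun Hun1 HuP; last lia.
rewrite HuP; last lia.
rewrite HPa // HPb //.
have -> : (s0 - n + (n + x' - (s0 - n)) = n + x')%N by lia.
by have -> : (s1.+1 + (n + y' - s1.+1) = n + y')%N by lia.
Qed.
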